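(* If $G$ is a melonic graph, then $d(G)=0$.
   Context: Trees. A 2-rooted ternary tree of order $n$ is a finite plane tree $U$ with a root vertex of degree 2 and $n$ true vertices of degree 4; each edge is internal or a leaf (half-edge). Each true vertex $v$ has parent edge $e_1(v)$ (towards the root) and ordered children edges $e_2(v),e_3(v),e_4(v)$. One root edge has type $\alpha$, the other $\bar\alpha$; if $e_1(v)$ has type $\tau$ then $e_2(v)$ has the other type and $e_3(v),e_4(v)$ have type $\tau$. Leaves of type $\alpha$ are leaves, of type $\bar\alpha$ anti-leaves. A heap-ordering labels true vertices bijectively by $\{1,\dots,n\}$, increasing from parent to child. Graphs. For even $n$, a graph of order $n$ is $G=(U,w,w')$: $U$ heap-ordered; $w$ a bijection leaves $\to$ anti-leaves (dashed edges; internal edges are solid); $w'$ a partition of true vertices into $n/2$ pairs (wavy edges) with, for each pair $\{v,v'\}$ ($v$ of smaller label), one of eight propagators in $(S,j,k)=(S_v,j_v,k_v)$, $(S',j',k')=(S_{v'},j_{v'},k_{v'})$: $\delta_{jj'}\delta_{kk'}$, $\delta_{j,S-j'}\delta_{kk'}$, $\delta_{jj'}\delta_{k,S-k'}$, $\delta_{j,S-j'}\delta_{k,S-k'}$, $\delta_{jk'}\delta_{kj'}$, $\delta_{j,S-k'}\delta_{kj'}$, $\delta_{jk'}\delta_{k,S-j'}$, $\delta_{j,S-k'}\delta_{k,S-j'}$, with $S=S'$; momenta $j_v,S_v-j_v,k_v,S_v-k_v$ sit on the ends at $v$ of $e_1(v),\dots,e_4(v)$. Faces and degree. Edge-ends at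 true vertices and at the root are slots. Each propagator of $\{v,v'\}$, with $S=S'$, identifies each of $j,S-j,k,S-k$ of $v$ with a momentum of $v'$, thus pairs each slot of $v$ with a slot of $v'$ (the four corners of the wavy edge). Let $\Gamma$ be the graph on slots with edges the solid and dashed edges, the corners, and an extra edge joining the two root slots; its components (cycles) are faces, $F(G)$ their number. $E$ is the $(n/2)\times F(G)$ matrix, rows wavy edges $\omega=\{v,v'\}$ ($v$ smaller label), columns faces, $E_{\omega f}$ = #(corners of $\omega$ in $f$ containing $e_1(v)$ or $e_2(v)$) − #(corners of $\omega$ in $f$ containing $e_3(v)$ or $e_4(v)$). $R(G)=\operatorname{rank}E$ ($0$ if $n=0$), $d(G):=n-F(G)+R(G)+1$. Melonic graphs. For two true vertices joined by three edges, the leading propagator is the one whose slot pairing maps the $v$-end of each joining edge to its $v'$-end. The trivial graph ($n=0$) is the root with a leaf and an anti-leaf joined by a dashed edge. A graph is melonic if (ignoring heap-orderings) it arises from the trivial graph by repeatedly inserting two new true vertices $v,v'$, joined to each other by three edges and by a wavy edge carrying the leading propagator, in one of these ways: (I) into a dashed edge $\{x,y\}$: $e_1(v)$ at $x$, $e_1(v')$ at $y$, dashed edges $e_2(v)$–$e_2(v')$ and $\{e_3(v),e_4(v)\}$ bijectively to $\{e_3(v'),e_4(v')\}$; (II) into a dashed edge $\{z,z'\}$: $e_1(v)$ at $z$, $e_1(v')=e_2(v)$, dashed edges $e_2(v')$–$z'$ and $\{e_3(v),e_4(v)\}$ bijectively to $\{e_3(v'),e_4(v')\}$; (III) into a dashed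 edge $\{z,z'\}$: $e_1(v)$ at $z$, $e_1(v')=e_a(v)$ ($a\in\{3,4\}$, $b$ the other), dashed edges $e_2(v)$–(one of $e_3(v'),e_4(v')$), $e_b(v)$–$e_2(v')$, remaining child leaf of $v'$–$z'$; (IIs) into a solid edge from $u$ to child $z$: $v$ below $u$, $e_1(v')=e_2(v)$, $e_1(z)=e_2(v')$, dashed edges $\{e_3(v),e_4(v)\}$ bijectively to $\{e_3(v'),e_4(v')\}$; (IIIs) as (IIs) but $e_1(v')=e_a(v)$, $a\in\{3,4\}$, $e_1(z)=e_c(v')$, $c\in\{3,4\}$, dashed edges $e_2(v)$–(other of $e_3(v'),e_4(v')$) and $e_b(v)$–$e_2(v')$. *)

(* Defs.v *)
From mathcomp Require Import all_boot all_order all_algebra.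
Set Implicit Arguments. Unset Strict Implicit. Unset Printing Implicit Defensive.
Import GRing.Theory Num.Theory.

(* True vertices of a graph of order n are 'I_n (label k+1 in the paper is *)
(* k here).  Slots: the two root slots inl 0 (root edge of type alpha) and *)
(* inl 1 (root edge of type anti-alpha), and the slot inr (v,i) = the end  *)
(* at v of the edge e_{i+1}(v), i : 'I_4.                                  *)
(* A graph is given by two involutions on slots:                           *)
(*  - e  ("edges"): pairs the two ends of every solid (internal) edge and  *)
(*       of every dashed edge (leaf -- anti-leaf);                         *)
(*  - c  ("corners"): pairs the slots of v with the slots of its wavy      *)
(*       partner v' according to the propagator, and the two root slots.   *)

Notation slot n := ('I_2 + 'I_n * 'I_4)%type.
Notation gmap n := {ffun slot n -> slot n}.

Definition rt0 {n} : slot n := inl ord0.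
Definition rt1 {n} : slot n := inl ord_max.
Definition sl {n} (v : 'I_n) (i : nat) : slot n := inr (v, inord i).
Definition e1 {n} (v : 'I_n) : slot n := sl v 0.

(* slots that are the upper end of their edge: root slots and child slots *)
Definition is_top {n} (s : slot n) : bool :=
  match s with inl _ => true | inr (_, i) => i != ord0 end.

(* half-edges (leaves or anti-leaves): upper ends not attached to a vertex *)
Definition is_half {n} (e : gmap n) (s : slot n) : bool :=
  is_top s && [forall v : 'I_n, e (e1 v) != s].

(* type of e_1(v) (true = alpha), computed by walking to the root *)
Fixpoint vty {n} (e : gmap n) (fuel : nat) (v : 'I_n) : bool :=
  match fuel with
  | 0 => true
  | f.+1 => match e (e1 v) with
            | inl r => r == ord0
            | inr (u, i) => if nat_of_ord i == 1 then ~~ vty e f u else vty e f u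
            end
  end.

(* type of the edge owning a slot: e_2(v) has the other type, e_3, e_4 same *)
Definition sty {n} (e : gmap n) (s : slot n) : bool :=
  match s with
  | inl r => r == ord0
  | inr (v, i) => if nat_of_ord i == 1 then ~~ vty e n v else vty e n v
  end.

Definition is_leaf {n} (e : gmap n) (s : slot n) := is_half e s && sty e s.
Definition is_antileaf {n} (e : gmap n) (s : slot n) := is_half e s && ~~ sty e s.

Fixpoint anc {n} (e : gmap n) (k : nat) (v : 'I_n) : option 'I_n :=
  match k with
  | 0 => Some v
  | k.+1 => match e (e1 v) with inl _ => None | inr (u, _) => anc e k u end
  end.

(* The eight propagators, as slot pairings (slot i of v |-> slot of v'),  *)
(* read off from the Kronecker deltas with S = S' and momenta             *)
(* j, S-j, k, S-k on slots 0,1,2,3 :                                      *)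
(*  d_{jj'}d_{kk'}, d_{j,S-j'}d_{kk'}, d_{jj'}d_{k,S-k'},                 *)
(*  d_{j,S-j'}d_{k,S-k'}, d_{jk'}d_{kj'}, d_{j,S-k'}d_{kj'},              *)
(*  d_{jk'}d_{k,S-j'}, d_{j,S-k'}d_{k,S-j'}.                              *)
Definition prop_table : seq (seq nat) :=
  [:: [:: 0; 1; 2; 3]; [:: 1; 0; 2; 3]; [:: 0; 1; 3; 2]; [:: 1; 0; 3; 2];
      [:: 2; 3; 0; 1]; [:: 3; 2; 0; 1]; [:: 2; 3; 1; 0]; [:: 3; 2; 1; 0]].
Definition prop (p : 'I_8) (i : 'I_4) : 'I_4 :=
  inord (nth 0 (nth [::] prop_table p) i).

Definition pregraph {n} (e c : gmap n) : Prop :=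
  (forall s, e (e s) = s) /\ (forall s, e s != s) /\
  (forall v, is_top (e (e1 v))) /\
  (forall v, exists k, anc e k v = None) /\
  (* dashed edges: w is a bijection leaves -> anti-leaves *)
  (forall s, is_leaf e s -> is_antileaf e (e s)) /\
  (forall s, is_antileaf e s -> is_leaf e (e s)) /\
  (* corners + extra root edge form an involution *)
  (forall s, c (c s) = s) /\ c rt0 = rt1 /\
  (forall v, exists2 v', v' != v &
     exists p : 'I_8, forall i, c (inr (v, i)) = inr (v', prop p i)).

Definition is_graph {n} (e c : gmap n) : Prop :=
  pregraph e c /\ (forall v u i, e (e1 v) = inr (u, i) -> u < v).

Definition frel {n} (e c : gmap n) : rel (slot n) :=
  fun s t => (t == e s) || (t == c s).
Definition faces {n} (e c : gmap n) : {set {set slot n}} :=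
  [set [set t | connect (frel e c) s t] | s : slot n].
Definition mate {n} (c : gmap n) (v : 'I_n) : 'I_n :=
  match c (e1 v) with inr (u, _) => u | inl _ => v end.
(* wavy edges, represented by their vertex of smaller label *)
Definition wavy {n} (c : gmap n) : {set 'I_n} := [set v : 'I_n | (v < mate c v)%N].

Definition Emx {n} (e c : gmap n) : 'M[rat]_(#|wavy c|, #|faces e c|) :=
  \matrix_(r < #|wavy c|, f < #|faces e c|)
    (\sum_(i < 4) (if inr (@enum_val _ (mem (wavy c)) r, i)
                        \in @enum_val _ (mem (faces e c)) f
                  then (if (i < 2)%N then 1 else -1) else 0))%R.

Definition degree {n} (e c : gmap n) : int :=
  (n%:Z - (#|faces e c|)%:Z + (\rank (Emx e c))%:Z + 1)%R.

Definition triv_map : gmap 0 :=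
  [ffun s => match s with inl r => inl (rev_ord r) | inr p => inr p end].

Section Insertion.
Variables (n : nat) (eG cG : gmap n) (eH cH : gmap n.+2).
Variables (phi : 'I_n -> 'I_n.+2) (v v' : 'I_n.+2).

Definition liftS (s : slot n) : slot n.+2 :=
  match s with inl r => inl r | inr (x, i) => inr (phi x, i) end.

Definition dashedG (x : slot n) : bool := is_top x && is_top (eG x).

Definition keep (x y : slot n) : Prop :=
  forall s, s != x -> s != y -> eH (liftS s) = liftS (eG s).

Definition moveI : Prop := exists x, dashedG x /\ exists b : bool,
  keep x (eG x) /\ eH (liftS x) = sl v 0 /\ eH (liftS (eG x)) = sl v' 0 /\
  eH (sl v 1) = sl v' 1 /\ eH (sl v 2) = sl v' (2 + b) /\
  eH (sl v 3) = sl v' (3 - b).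

Definition moveII : Prop := exists z, dashedG z /\ exists b : bool,
  keep z (eG z) /\ eH (liftS z) = sl v 0 /\ eH (sl v 1) = sl v' 0 /\
  eH (sl v' 1) = liftS (eG z) /\
  eH (sl v 2) = sl v' (2 + b) /\ eH (sl v 3) = sl v' (3 - b).

Definition moveIII : Prop := exists z, dashedG z /\ exists a b : bool,
  keep z (eG z) /\ eH (liftS z) = sl v 0 /\ eH (sl v (2 + a)) = sl v' 0 /\
  eH (sl v 1) = sl v' (2 + b) /\ eH (sl v (3 - a)) = sl v' 1 /\
  eH (sl v' (3 - b)) = liftS (eG z).

Definition moveIIs : Prop := exists t z, eG t = e1 z /\ exists b : bool,
  keep t (e1 z) /\ eH (liftS t) = sl v 0 /\ eH (sl v 1) = sl v' 0 /\
  eH (sl v' 1) = liftS (e1 z) /\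
  eH (sl v 2) = sl v' (2 + b) /\ eH (sl v 3) = sl v' (3 - b).

Definition moveIIIs : Prop := exists t z, eG t = e1 z /\ exists a b : bool,
  keep t (e1 z) /\ eH (liftS t) = sl v 0 /\ eH (sl v (2 + a)) = sl v' 0 /\
  eH (sl v' (2 + b)) = liftS (e1 z) /\ eH (sl v 1) = sl v' (3 - b) /\
  eH (sl v (3 - a)) = sl v' 1.

(* H arises from G by inserting v (upper) and v' with the leading propagator;
   phi embeds the old vertices (arbitrary relabelling: heap orders ignored) *)
Definition insertion_at : Prop :=
  pregraph eH cH /\ injective phi /\ v != v' /\
  (forall x, (phi x != v) && (phi x != v')) /\
  (forall s, cH (liftS s) = liftS (cG s)) /\
  (exists p : 'I_8, (forall i, cH (inr (v, i)) = inr (v', prop p i)) /\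
     (* leading: the v-end of each joining edge is paired with its v'-end *)
     (forall i j, eH (inr (v, i)) = inr (v', j) -> prop p i = j)) /\
  (moveI \/ moveII \/ moveIII \/ moveIIs \/ moveIIIs).

End Insertion.

Definition insertion {n} (eG cG : gmap n) (eH cH : gmap n.+2) : Prop :=
  exists phi v v', insertion_at eG cG eH cH phi v v'.

Inductive melonic : forall n, gmap n -> gmap n -> Prop :=
| melonic_triv : melonic triv_map triv_map
| melonic_ins n (eG cG : gmap n) (eH cH : gmap n.+2) :
    melonic eG cG -> insertion eG cG eH cH -> melonic eH cH.

(* Main.v *)
Require Import Defs.
From mathcomp Require Import all_boot all_order all_algebra.
From mathcomp Require Import zify ring.
Set Implicit Arguments. Unset Strict Implicit. Unset Printing Implicit Defensive.
Import GRing.Theory Num.Theory.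
Local Open Scope ring_scope.

Definition sgn (i : 'I_4) : rat := if (i < 2)%N then 1 else -1.

Definition ent {n} (F : {set slot n}) (u : 'I_n) : rat :=
  \sum_(i < 4) (if inr (u, i) \in F then sgn i else 0).

Definition comp {n} (e c : gmap n) (s : slot n) : {set slot n} :=
  [set t | connect (Defs.frel e c) s t].

Definition sg {n} (c : gmap n) (u : 'I_n) : rat :=
  match c (e1 u) with inr (_, j) => sgn j | inl _ => 1 end.

Definition IND {n} (e c : gmap n) : Prop :=
  forall lam : 'I_n -> rat,
    (forall F, F \in faces e c -> \sum_u lam u * ent F u = 0) ->
    forall u, lam u + sg c u * lam (mate c u) = 0.

Lemma sgn_sq i : sgn i * sgn i = 1.
Proof. by rewrite /sgn; case: ifP => _; rewrite ?mulr1 ?mulrNN ?mulr1. Qed.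

Lemma ord_inord4 (i : 'I_4) : inord (val i) = i.
Proof. exact: inord_val. Qed.

Definition tab (p i : nat) : nat := nth 0 (nth [::] prop_table p) i.

Lemma tab_all : all (fun p => all (fun i => (tab p i < 4)%N &&
   ((tab p i < 2)%N == ((tab p 0 < 2)%N == (i < 2)%N)) &&
   all (fun j => (tab p i == tab p j) == (i == j)) (iota 0 4)) (iota 0 4)) (iota 0 8).
Proof. by []. Qed.

Lemma tab_facts (p : 'I_8) (i j : 'I_4) : [/\ (tab p i < 4)%N,
   (tab p i < 2)%N = ((tab p 0 < 2)%N == (i < 2)%N) &
   (tab p i == tab p j) = (i == j)].
Proof.
have /allP/(_ (val p)) := tab_all.
rewrite mem_iota ltn_ord => /(_ isT) /allP /(_ (val i)).
rewrite mem_iota ltn_ord => /(_ isT) /andP [/andP [H1 /eqP H2]] /allP /(_ (val j)).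
by rewrite mem_iota ltn_ord => /(_ isT) /eqP H3.
Qed.

Lemma val_prop (p : 'I_8) i : nat_of_ord (prop p i) = tab p i.
Proof. by rewrite /prop inordK //; case: (tab_facts p i i). Qed.

Lemma prop_inj (p : 'I_8) : injective (prop p).
Proof.
move=> i j E; apply/eqP; case: (tab_facts p i j) => _ _ <-.
by rewrite -!val_prop E.
Qed.

Lemma prop_sgn (p : 'I_8) i : sgn (prop p i) = sgn (prop p ord0) * sgn i.
Proof.
rewrite /sgn !val_prop; case: (tab_facts p i i) => _ -> _.
case: (_ < 2)%N; case: (_ < 2)%N => /=;
  rewrite ?mulr1 ?mul1r ?mulrNN ?mulN1r ?mulrN1 //.
Qed.

Lemma inord0 : (inord 0 : 'I_4) = ord0.
Proof. by apply/val_inj; rewrite /= inordK. Qed.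

Lemma frel_e n (e c : gmap n) s : Defs.frel e c s (e s).
Proof. by rewrite /Defs.frel eqxx. Qed.
Lemma frel_c n (e c : gmap n) s : Defs.frel e c s (c s).
Proof. by rewrite /Defs.frel eqxx orbT. Qed.

Section PG.
Variables (n : nat) (e c : gmap n).
Hypothesis HP : pregraph e c.

Lemma pg_ee s : e (e s) = s. Proof. by case: HP. Qed.
Lemma pg_cc s : c (c s) = s. Proof. by case: HP => _ [_ [_ [_ [_ [_ [H _]]]]]]. Qed.
Lemma pg_cv u : exists2 u', u' != u & exists p : 'I_8, forall i, c (inr (u, i)) = inr (u', prop p i).
Proof. by case: HP => _ [_ [_ [_ [_ [_ [_ [_ H]]]]]]]. Qed.

Lemma mate_eq u u' p : (forall i, c (inr (u,i)) = inr (u', prop p i)) ->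
  mate c u = u' /\ sg c u = sgn (prop p ord0).
Proof. by rewrite /mate /sg /e1 /sl inord0 => ->. Qed.

Lemma mate_facts u : exists u' (p q : 'I_8), [/\ u' != u,
  (forall i, c (inr (u, i)) = inr (u', prop p i)),
  (forall i, c (inr (u', i)) = inr (u, prop q i)) & prop q (prop p ord0) = ord0].
Proof.
have [u' nu [p Hp]] := pg_cv u.
have [u'' _ [q Hq]] := pg_cv u'.
have := pg_cc (inr (u, ord0)); rewrite Hp Hq => -[E1 E2].
by exists u', p, q; split => //; rewrite -E1.
Qed.

Lemma mateK u : mate c (mate c u) = u.
Proof.
have [u' [p [q [_ Hp Hq _]]]] := mate_facts u.
by have [-> _] := mate_eq Hp; have [-> _] := mate_eq Hq.
Qed.

Lemma mate_neq u : mate c u != u.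
Proof.
have [u' [p [q [nu Hp Hq _]]]] := mate_facts u.
by have [-> _] := mate_eq Hp.
Qed.

Lemma sgn_pm i : sgn i = 1 \/ sgn i = -1.
Proof. by rewrite /sgn; case: ifP; [left|right]. Qed.

Lemma sg_sq u : sg c u * sg c u = 1.
Proof. by rewrite /sg; case: (c (e1 u)) => [r|[_ j]]; [exact: mulr1|exact: sgn_sq]. Qed.

Lemma sg_mate u : sg c (mate c u) = sg c u.
Proof.
have [u' [p [q [_ Hp Hq E]]]] := mate_facts u.
have [-> ->] := mate_eq Hp; have [_ ->] := mate_eq Hq.
have := prop_sgn q (prop p ord0); rewrite E.
have -> : sgn ord0 = 1 by [].
case: (sgn_pm (prop q ord0)) => ->; case: (sgn_pm (prop p ord0)) => -> //;
  rewrite ?mulr1 ?mulrN1 ?opprK //; move/eqP; rewrite -subr_eq0 ?opprK //.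
Qed.

Lemma connect_c s0 s : connect (Defs.frel e c) s0 s -> connect (Defs.frel e c) s0 (c s).
Proof. by move=> H; apply: connect_trans H (connect1 (frel_c _ _ _)). Qed.
Lemma connect_e s0 s : connect (Defs.frel e c) s0 s -> connect (Defs.frel e c) s0 (e s).
Proof. by move=> H; apply: connect_trans H (connect1 (frel_e _ _ _)). Qed.

Lemma face_c F s : F \in faces e c -> (c s \in F) = (s \in F).
Proof.
case/imsetP => s0 _ ->; rewrite !inE; apply/idP/idP; last exact: connect_c.
by move/connect_c; rewrite pg_cc.
Qed.

Lemma ent_mate F u : F \in faces e c -> ent F (mate c u) = sg c u * ent F u.
Proof.
move=> HF.
have [u' [p [q [_ Hp Hq _]]]] := mate_facts u.
have [-> ->] := mate_eq Hp.
rewrite /ent (reindex_inj (@prop_inj p)) big_distrr /=.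
apply: eq_bigr => i _; rewrite -Hp face_c // prop_sgn.
by case: ifP; rewrite ?mulr0.
Qed.

End PG.

Lemma frel_sym n (e c : gmap n) : (forall s, e (e s) = s) -> (forall s, c (c s) = s) ->
  symmetric (Defs.frel e c).
Proof.
move=> He Hc s t; rewrite /Defs.frel.
apply/idP/idP => /orP [] /eqP ->; by rewrite ?He ?Hc eqxx ?orbT.
Qed.

Lemma wavy_card n (e c : gmap n) : pregraph e c -> (2 * #|wavy c| = n)%N.
Proof.
move=> HP.
have mK := mateK HP.
have CW : ~: wavy c = [set mate c x | x in wavy c].
  apply/setP => u; rewrite in_setC.
  rewrite -{2}(mK u) (mem_imset _ _ (can_inj mK)) !inE mK -leqNgt leq_eqVlt.
  have := mate_neq HP u; rewrite -(inj_eq val_inj) /= eq_sym => /negbTE ->.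
  by [].
have := cardsC (wavy c); rewrite CW card_imset ?card_ord; last exact: can_inj mK.
by rewrite mul2n -addnn.
Qed.

Lemma rank_Emx n (e c : gmap n) : pregraph e c -> IND e c ->
  \rank (Emx e c) = #|wavy c|.
Proof.
move=> HP HI.
set A := Emx e c.
suff K0 : kermx A = 0.
  apply/eqP; rewrite eqn_leq rank_leq_row /=.
  have := mxrank_ker A; rewrite K0 mxrank0 => /esym/eqP; by rewrite subn_eq0.
have KA := mulmx_ker A.
apply/matrixP => i r; rewrite [RHS]mxE.
set K := kermx A.
pose lam (u : 'I_n) := \sum_(r' | enum_val r' == u) K i r'.
have Hlam : forall F, F \in faces e c -> \sum_u lam u * ent F u = 0.
  move=> F HF.
  have := congr1 (fun M : 'M[rat]_(#|wavy c|, #|faces e c|) => M i (enum_rank_in HF F)) KA; rewrite !mxE => E; apply: etrans E.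
  rewrite /lam.
  under eq_bigr do rewrite big_distrl /=.
  rewrite (exchange_big_dep xpredT) //=.
  apply: eq_bigr => r' _.
  rewrite (eq_bigl (fun u => u == enum_val r')); last by move=> u; rewrite eq_sym.
  rewrite big_pred1_eq; congr (_ * _); rewrite /Emx mxE enum_rankK_in //.
have := HI lam Hlam (enum_val r).
have -> : lam (enum_val r) = K i r.
  rewrite /lam (eq_bigl (fun r' => r' == r)) ?big_pred1_eq //.
  by move=> r'; rewrite (inj_eq enum_val_inj).
have -> : lam (mate c (enum_val r)) = 0.
  rewrite /lam big_pred0 // => r'.
  apply/negbTE/eqP => E.
  have := enum_valP r'; rewrite E; have := enum_valP r.
  rewrite !inE (mateK HP) => H1 H2.
  by have := ltn_trans H1 H2; rewrite ltnn.
by rewrite mulr0 addr0.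
Qed.

Lemma closed_sub (T : finType) (r : rel T) (A : {set T}) s :
  s \in A -> (forall u w, u \in A -> r u w -> w \in A) ->
  forall t, connect r s t -> t \in A.
Proof.
move=> sA cl t /connectP [p pth ->] {t}.
elim: p s sA pth => //= y p IH s sA /andP [rsy pth].
exact: IH (cl _ _ sA rsy) pth.
Qed.

Lemma connect_lift (T1 T2 : finType) (r1 : rel T1) (r2 : rel T2) (f : T1 -> T2) :
  (forall s t, r1 s t -> connect r2 (f s) (f t)) ->
  forall s t, connect r1 s t -> connect r2 (f s) (f t).
Proof.
move=> H s t /connectP [p pth ->] {t}.
elim: p s pth => //= y p IH s /andP [rsy pth].
exact: connect_trans (H _ _ rsy) (IH _ pth).
Qed.

Lemma sl_inj n (u : 'I_n) i j : (i < 4)%N -> (j < 4)%N -> (sl u i == sl u j) = (i == j).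
Proof.
move=> Hi Hj; rewrite /sl; apply/eqP/eqP => [[]|-> //].
by move/(congr1 val) => /=; rewrite !inordK.
Qed.

Lemma sl_neq n (u u' : 'I_n) i j : u != u' -> sl u i != sl u' j.
Proof. by move=> H; apply/eqP => -[] /eqP; rewrite (negbTE H). Qed.

Lemma sl_val n (u : 'I_n) (i : 'I_4) : sl u i = inr (u, i).
Proof. by rewrite /sl inord_val. Qed.

Lemma inr_pair_eq n (u u' : 'I_n) (i j : 'I_4) :
  (inr (u, i) == inr (u', j) :> slot n) = (u == u') && (i == j).
Proof. by apply/eqP/andP => [[-> ->]|[/eqP -> /eqP ->]]. Qed.

Section Ins.
Variables (n : nat) (eG cG : gmap n) (eH cH : gmap n.+2) (phi : 'I_n -> 'I_n.+2).
Variables (v v' : 'I_n.+2) (x : slot n) (jb : nat).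
Hypotheses (HeG : forall s, eG (eG s) = s) (HP : pregraph eH cH) (Hphi : injective phi)
  (Hvv : v != v') (Hphv : forall y, (phi y != v) && (phi y != v'))
  (HC : forall s, cH (liftS phi s) = liftS phi (cG s))
  (Hp : exists p : 'I_8, (forall i, cH (inr (v, i)) = inr (v', prop p i)) /\
        (forall i j, eH (inr (v, i)) = inr (v', j) -> prop p i = j))
  (HK : keep eG eH phi x (eG x))
  (Ha : eH (liftS phi x) = sl v 0) (Hb : eH (liftS phi (eG x)) = sl v' jb) (Hjb : (jb < 4)%N)
  (HJ : forall i, (0 < i < 4)%N -> exists2 j, (j < 4)%N & eH (sl v i) = sl v' j)
  (Hcov : forall j, (j < 4)%N -> j = jb \/ exists2 i, (0 < i < 4)%N & eH (sl v i) = sl v' j).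

Local Notation L := (liftS phi).
Local Notation a := (sl v 0 : slot n.+2).
Local Notation b := (sl v' jb : slot n.+2).
Local Notation RH := (Defs.frel eH cH).
Local Notation RG := (Defs.frel eG cG).

Lemma HeH s : eH (eH s) = s. Proof. by case: HP. Qed.
Lemma HcH s : cH (cH s) = s. Proof. by case: HP => _ [_ [_ [_ [_ [_ [H _]]]]]]. Qed.

Lemma L_inj : injective L.
Proof.
by case=> [r|[y i]] [r'|[y' i']] //= [] => [->|/Hphi -> ->].
Qed.

Lemma L_nv s i : L s != inr (v, i).
Proof. by case: s => [r|[y k]] //=; apply/eqP => -[] E _; have := Hphv y; rewrite E eqxx. Qed.
Lemma L_nv' s i : L s != inr (v', i).
Proof. by case: s => [r|[y k]] //=; apply/eqP => -[] E _; have := Hphv y; rewrite E eqxx andbF. Qed.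

Lemma im_phi : [set phi z | z in setT] = [set y | (y != v) && (y != v')].
Proof.
apply/eqP; rewrite eqEcard; apply/andP; split.
  by apply/subsetP => y /imsetP [z _ ->]; rewrite inE Hphv.
rewrite card_imset // cardsT card_ord.
have := cardsC [set v; v']; rewrite cards2 Hvv card_ord.
have -> : ~: [set v; v'] = [set y | (y != v) && (y != v')].
  by apply/setP => y; rewrite !inE negb_or.
by move=> E; rewrite -(leq_add2l 2) E.
Qed.

Lemma vert_cases u : [\/ u = v, u = v' | exists z, u = phi z].
Proof.
case: (eqVneq u v) => [->|nv]; first by constructor 1.
case: (eqVneq u v') => [->|nv']; first by constructor 2.
have : u \in [set y | (y != v) && (y != v')] by rewrite inE nv nv'.
by rewrite -im_phi => /imsetP [z _ ->]; constructor 3; exists z.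
Qed.

Lemma slot_cases w : [\/ exists s, w = L s, exists2 i, (i < 4)%N & w = sl v i |
   exists2 i, (i < 4)%N & w = sl v' i].
Proof.
case: w => [r|[y i]]; first by constructor 1; exists (inl r).
case: (vert_cases y) => [->|->|[z ->]].
- by constructor 2; exists i => //; rewrite sl_val.
- by constructor 3; exists i => //; rewrite sl_val.
- by constructor 1; exists (inr (z, i)).
Qed.

Lemma sum_split (f : 'I_n.+2 -> rat) :
  \sum_y f y = \sum_z f (phi z) + f v + f v'.
Proof.
rewrite (bigD1 v) // (bigD1 v') /=; last by rewrite eq_sym.
have -> : \sum_(i | (i != v) && (i != v')) f i = \sum_z f (phi z).
  rewrite -[RHS](big_imset _ (in2W Hphi)) /=.
  apply: eq_bigl => y; have := im_phi; move/setP/(_ y); rewrite inE => <-.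
  by apply/imsetP/imsetP => -[z _ ->]; exists z.
ring.
Qed.

Lemma HJc i : (0 < i < 4)%N -> exists2 j, (j < 4)%N &
  (eH (sl v i) = sl v' j /\ cH (sl v i) = sl v' j).
Proof.
move=> Hi; have [j Hj E] := HJ Hi; exists j => //; split => //.
have [p [Hc Hl]] := Hp.
by move: E; rewrite /sl Hc => /Hl ->.
Qed.

Lemma Hca : cH a = b.
Proof.
have [p [Hc _]] := Hp.
have Ca : cH a = sl v' (prop p (inord 0)) by rewrite /sl Hc inord_val.
case: (Hcov (ltn_ord (prop p (inord 0)))) => [E|[i Hi E]].
  by rewrite Ca E.
have [j Hj [E1 C1]] := HJc Hi.
have : cH (sl v i) = cH a by rewrite Ca C1 -E1 E.
move/(can_inj HcH)/eqP; rewrite sl_inj //; last by case/andP: Hi.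
by move/eqP => Ei; move: Hi; rewrite Ei.
Qed.

Lemma Hcb : cH b = a. Proof. by rewrite -Hca HcH. Qed.
Lemma Hea : eH a = L x. Proof. by rewrite -Ha HeH. Qed.
Lemma Heb : eH b = L (eG x). Proof. by rewrite -Hb HeH. Qed.

Lemma symH : connect_sym RH.
Proof. exact/sym_connect_sym/frel_sym/HcH/HeH. Qed.

Lemma stepL s t : RG s t -> connect RH (L s) (L t).
Proof.
rewrite {1}/Defs.frel => /orP [] /eqP ->; last first.
  by apply: connect1; rewrite -HC frel_c.
case: (eqVneq s x) => [->|nx].
  apply: connect_trans (connect1 (frel_e _ _ _)) _; rewrite Ha.
  apply: connect_trans (connect1 (frel_c _ _ _)) _; rewrite Hca.
  by apply: connect1; rewrite -Heb frel_e.
case: (eqVneq s (eG x)) => [->|nex].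
  apply: connect_trans (connect1 (frel_e _ _ _)) _; rewrite Hb.
  apply: connect_trans (connect1 (frel_c _ _ _)) _; rewrite Hcb HeG.
  by apply: connect1; rewrite -Hea frel_e.
by apply: connect1; rewrite -HK // frel_e.
Qed.

Definition Phi (F : {set slot n}) : {set slot n.+2} :=
  L @: F :|: (if x \in F then [set a; b] else set0).

Lemma mem_Phi s F : (L s \in Phi F) = (s \in F).
Proof.
rewrite /Phi in_setU (mem_imset _ _ L_inj).
case: (x \in F); rewrite ?in_set0 ?orbF // in_set2.
by rewrite (negbTE (L_nv _ _)) (negbTE (L_nv' _ _)) !orbF.
Qed.

Lemma compH_L s : comp eH cH (L s) = Phi (comp eG cG s).
Proof.
set F := comp eG cG s.
have Fe t : t \in F -> eG t \in F by rewrite !inE; apply: connect_e.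
have Fc t : t \in F -> cG t \in F by rewrite !inE; apply: connect_c.
apply/setP => w; rewrite [in LHS]inE; apply/idP/idP.
  apply: closed_sub; first by rewrite mem_Phi inE connect0.
  move=> u w'; rewrite {1}/Phi in_setU => /orP [/imsetP [t Ht ->]|Hu] /orP [] /eqP ->.
  - case: (eqVneq t x) => [Et|ntx].
      by rewrite Et Ha /Phi in_setU -Et Ht in_set2 eqxx orbT.
    case: (eqVneq t (eG x)) => [Et|ntex].
      have xF : x \in F by rewrite -(HeG x) -Et Fe.
      by rewrite Et Hb /Phi in_setU xF in_set2 eqxx !orbT.
    by rewrite HK // mem_Phi Fe.
  - by rewrite HC mem_Phi Fc.
  - move: Hu; case: ifP => xF; last by rewrite in_set0.
    rewrite in_set2 => /orP [] /eqP ->.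
      by rewrite Hea mem_Phi.
    by rewrite Heb mem_Phi Fe.
  - move: Hu; case: ifP => xF; last by rewrite in_set0.
    rewrite in_set2 => /orP [] /eqP ->.
      by rewrite Hca /Phi in_setU xF in_set2 eqxx !orbT.
    by rewrite Hcb /Phi in_setU xF in_set2 eqxx !orbT.
rewrite /Phi in_setU => /orP [/imsetP [t Ht ->]|].
  by apply: connect_lift stepL _ _ _; rewrite inE in Ht.
case: ifP => xF; last by rewrite in_set0.
have cx : connect RH (L s) (L x) by apply: connect_lift stepL _ _ _; rewrite inE in xF.
have ca : connect RH (L s) a.
  by apply: connect_trans cx (connect1 _); rewrite -Ha frel_e.
rewrite in_set2 => /orP [] /eqP -> //.
by apply: connect_trans ca (connect1 _); rewrite -Hca frel_c.
Qed.

Lemma compH_new i j : (0 < i < 4)%N -> eH (sl v i) = sl v' j -> cH (sl v i) = sl v' j ->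
  comp eH cH (sl v i) = [set sl v i; sl v' j].
Proof.
move=> Hi E C; apply/setP => w; rewrite inE; apply/idP/idP.
  apply: closed_sub; first by rewrite in_set2 eqxx.
  move=> u w'; rewrite in_set2 => /orP [] /eqP -> /orP [] /eqP ->.
  - by rewrite E in_set2 eqxx orbT.
  - by rewrite C in_set2 eqxx orbT.
  - by rewrite -E HeH in_set2 eqxx.
  - by rewrite -C HcH in_set2 eqxx.
rewrite in_set2 => /orP [] /eqP -> //.
by apply: connect1; rewrite -E frel_e.
Qed.

Lemma same_comp w w' : connect RH w w' -> comp eH cH w = comp eH cH w'.
Proof. by move=> H; apply/setP => t; rewrite !inE (same_connect symH H). Qed.

Definition NewF : {set {set slot n.+2}} := [set comp eH cH (sl v (val k).+1) | k : 'I_3].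

Lemma memNew i k : (0 < i < 4)%N -> (0 < k < 4)%N ->
  (sl v k \in comp eH cH (sl v i)) = (k == i).
Proof.
move=> Hi Hk; have [j Hj [E C]] := HJc Hi.
rewrite (compH_new Hi E C) in_set2 (negbTE (sl_neq _ _ Hvv)) orbF sl_inj //.
  by case/andP: Hk.
by case/andP: Hi.
Qed.

Lemma faces_H : faces eH cH = (Phi @: faces eG cG) :|: NewF.
Proof.
apply/setP => F; rewrite in_setU; apply/idP/idP.
  case/imsetP => w _ ->.
  case: (slot_cases w) => [[s ->]|[i Hi ->]|[j Hj ->]].
  - by apply/orP; left; rewrite -[X in X \in _]/(comp eH cH (L s)) compH_L; apply: imset_f; apply: imset_f.
  - case: i Hi => [|i] Hi.
      rewrite -[X in X \in _]/(comp eH cH _) (@same_comp _ (L x)); last first.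
        by apply: connect1; rewrite -Hea frel_e.
      by apply/orP; left; rewrite compH_L; apply: imset_f; apply: imset_f.
    apply/orP; right; apply/imsetP; exists (Ordinal (Hi : (i < 3)%N)) => //.
  - case: (Hcov Hj) => [Ej|[i Hi E]].
      rewrite -[X in X \in _]/(comp eH cH _) (@same_comp _ (L (eG x))); last first.
        by apply: connect1; rewrite -Heb Ej frel_e.
      by apply/orP; left; rewrite compH_L; apply: imset_f; apply: imset_f.
    apply/orP; right; apply/imsetP.
    case: i Hi E => [//|i] Hi E.
    exists (Ordinal (Hi : (i < 3)%N)) => //=.
    apply: same_comp; apply: connect1; rewrite -E -{2}[sl v _]HeH frel_e //.
case/orP => [/imsetP [G /imsetP [s _ ->] ->]|/imsetP [k _ ->]].
  rewrite -[X in Phi X]/(comp eG cG s) -compH_L; exact: imset_f.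
exact: imset_f.
Qed.

Lemma Phi_inj : injective Phi.
Proof. by move=> F1 F2 E; apply/setP => s; rewrite -!mem_Phi E. Qed.

Lemma card_faces : #|faces eH cH| = (#|faces eG cG| + 3)%N.
Proof.
rewrite faces_H cardsU card_imset; last exact: Phi_inj.
have -> : #|NewF| = 3.
  rewrite card_imset ?card_ord // => k1 k2 E.
  apply/val_inj/eqP; rewrite -eqSS.
  have Hk1 : (0 < (val k1).+1 < 4)%N by case: k1 {E} => k /=; lia.
  have Hk2 : (0 < (val k2).+1 < 4)%N by case: k2 {E} => k /=; lia.
  by have := memNew Hk1 Hk1; rewrite E memNew // eqxx => ->.
have -> : (Phi @: faces eG cG) :&: NewF = set0.
  apply/setP => F; rewrite !inE; apply/negbTE/andP => -[/imsetP [G _ ->] /imsetP [k _ E]].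
  have : sl v (val k).+1 \in Phi G by rewrite E inE connect0.
  rewrite /Phi in_setU; case/orP => [/imsetP [t _ /eqP]|].
    by rewrite eq_sym /sl (negbTE (L_nv _ _)).
  case: ifP => _; last by rewrite in_set0.
  rewrite in_set2 sl_inj; last 2 first; [by case: k {E}=> k /=; lia| by [] | ]; move=> /orP [//|/eqP E'].
  by move: (sl_neq (val k).+1 jb Hvv); rewrite E' eqxx.
by rewrite cards0 subn0.
Qed.

Lemma ent_Phi F z : ent (Phi F) (phi z) = ent F z.
Proof.
by apply: eq_bigr => i _; rewrite -[inr (phi z, i)]/(L (inr (z, i))) mem_Phi.
Qed.

Lemma IND_ins : IND eG cG -> IND eH cH.
Proof.
move=> IG lam Hlam.
have [p [Hpc _]] := Hp.
have mv : mate cH v = v' by rewrite /mate /e1 /sl inord0 Hpc.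
have [j1 Hj1 [E1 C1]] := HJc (isT : (0 < 1 < 4)%N).
have F1 : comp eH cH (sl v 1) \in faces eH cH by apply: imset_f.
have entphi0 (z : 'I_n) : ent (comp eH cH (sl v 1)) (phi z) = 0.
  rewrite (compH_new _ E1 C1) //; apply: big1 => i _.
  rewrite -[inr (phi z, i)]/(L (inr (z, i))) in_set2 /sl.
  by rewrite (negbTE (L_nv _ _)) (negbTE (L_nv' _ _)).
have entv1 : ent (comp eH cH (sl v 1)) v = 1.
  rewrite (compH_new _ E1 C1) // /ent (bigD1 (inord 1)) //= big1 => [|i ni].
    by rewrite in_set2 /sl eqxx /sgn inordK // addr0.
  by rewrite in_set2 /sl !inr_pair_eq eqxx (negbTE ni) (negbTE Hvv).
have key : lam v + sg cH v * lam v' = 0.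
  have := Hlam _ F1; rewrite sum_split big1 ?add0r; last first.
    by move=> z _; rewrite entphi0 mulr0.
  rewrite -mv (ent_mate HP _ F1) mv entv1 => H.
  by rewrite -[X in _ = X]H; ring.
have HG : forall F, F \in faces eG cG -> \sum_z lam (phi z) * ent F z = 0.
  move=> F HF; have [s _ Fs] := imsetP HF.
  have HF' : Phi F \in faces eH cH.
    by rewrite Fs -[X in Phi X]/(comp eG cG s) -compH_L; apply: imset_f.
  have := Hlam _ HF'; rewrite sum_split -mv (ent_mate HP _ HF') mv.
  under eq_bigr do rewrite ent_Phi.
  have K : (lam v + sg cH v * lam v') * ent (Phi F) v = 0 by rewrite key mul0r.
  move=> H; rewrite -[X in _ = X]H -addrA.
  have -> : lam v * ent (Phi F) v + lam v' * (sg cH v * ent (Phi F) v) = 0.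
    by rewrite -[X in _ = X]K; ring.
  by rewrite addr0.
have mv' : mate cH v' = v by rewrite -mv (mateK HP).
have sgv' : sg cH v' = sg cH v by rewrite -mv (sg_mate HP).
move=> u; case: (vert_cases u) => [->|->|[z ->]].
- by rewrite mv.
- rewrite mv' sgv'.
  have K2 := congr1 (fun t => sg cH v * t) key; rewrite /= mulr0 in K2.
  by rewrite -[X in _ = X]K2 mulrDr mulrA sg_sq mul1r addrC.
- have Hz : cH (e1 (phi z)) = L (cG (e1 z)) := HC (e1 z).
  have := IG (fun z => lam (phi z)) HG z; rewrite /= /sg /mate Hz.
  by case: (cG (e1 z)) => [r|[y k]].
Qed.

Lemma ins_main : (#|faces eH cH| = #|faces eG cG| + 3)%N /\ (IND eG cG -> IND eH cH).
Proof. split; [exact: card_faces | exact: IND_ins]. Qed.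

End Ins.

Ltac solvecov := first [ by left | by right; exists 1 | by right; exists 2 | by right; exists 3 ].
Ltac solveJ := first [ by exists 0 | by exists 1 | by exists 2 | by exists 3 ].

Ltac fin := (split => //; split;
    [intros [|[|[|[|j]]]] Hi; (try solveJ); exfalso; revert Hi; lia
    | intros [|[|[|[|j]]]] Hi; (try solvecov); exfalso; revert Hi; lia]).

Lemma ins_step n (eG cG : gmap n) (eH cH : gmap n.+2) :
  (forall s, eG (eG s) = s) -> insertion eG cG eH cH ->
  [/\ (forall s, eH (eH s) = s), (#|faces eH cH| = #|faces eG cG| + 3)%N &
      (IND eG cG -> IND eH cH)].
Proof.
move=> HeG [phi [v [v' [HP [Hphi [Hvv [Hphv [HC [Hp Hmv]]]]]]]]].
have HeH s : eH (eH s) = s by case: HP.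
suff [x [jb [HK Ha Hb Hjb [HJ Hcov]]]] : exists x jb,
  [/\ keep eG eH phi x (eG x), eH (liftS phi x) = sl v 0,
      eH (liftS phi (eG x)) = sl v' jb, (jb < 4)%N &
      ((forall i, (0 < i < 4)%N -> exists2 j, (j < 4)%N & eH (sl v i) = sl v' j) /\
      (forall j, (j < 4)%N -> j = jb \/ exists2 i, (0 < i < 4)%N & eH (sl v i) = sl v' j))].
  have [C I] := ins_main HeG HP Hphi Hvv Hphv HC Hp HK Ha Hb Hjb HJ Hcov.
  by split.
case: Hmv => [[x [_ [bb [HK [Ha [Hb [E1 [E2 E3]]]]]]]]|
             [[z [_ [bb [HK [Ha [E1 [Eb [E2 E3]]]]]]]]|
             [[z [_ [a [bb [HK [Ha [Ea0 [E1 [Ea1 Eb]]]]]]]]]|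
             [[t [z [Et [bb [HK [Ha [E1 [Eb [E2 E3]]]]]]]]]|
              [t [z [Et [a [bb [HK [Ha [Ea0 [Eb [E1 Ea1]]]]]]]]]]]]]].
- exists x, 0; case: bb E2 E3 => E2 E3; fin.
- have Hb : eH (liftS phi (eG z)) = sl v' 1 by rewrite -Eb HeH.
  exists z, 1; case: bb E2 E3 => E2 E3; fin.
- have Hb : eH (liftS phi (eG z)) = sl v' (3 - bb)%N by rewrite -Eb HeH.
  exists z, (3 - bb)%N; case: a Ea0 Ea1 => Ea0 Ea1; case: bb E1 Eb Hb => E1 Eb Hb; fin.
- have Hb : eH (liftS phi (eG t)) = sl v' 1 by rewrite Et -Eb HeH.
  rewrite -Et in HK.
  exists t, 1; case: bb E2 E3 => E2 E3; fin.
- have Hb : eH (liftS phi (eG t)) = sl v' (2 + bb)%N by rewrite Et -Eb HeH.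
  rewrite -Et in HK.
  exists t, (2 + bb)%N; case: a Ea0 Ea1 => Ea0 Ea1; case: bb E1 Eb Hb => E1 Eb Hb; fin.
Qed.

Lemma triv_inv : forall s : slot 0, triv_map (triv_map s) = s.
Proof.
case=> [r|[[m Hm] k]]; last by have := Hm; rewrite ltn0.
by rewrite !ffunE /= rev_ordK.
Qed.

Lemma triv_cases (s t : slot 0) : t = s \/ t = triv_map s.
Proof.
case: s => [r|[[m Hm] k]]; last by have := Hm; rewrite ltn0.
case: t => [r'|[[m Hm] k]]; last by have := Hm; rewrite ltn0.
rewrite ffunE.
case: r r' => [[|[|//]] Hr] [[|[|//]] Hr'];
  [left|right|right|left]; congr inl; apply: val_inj => //.
Qed.

Lemma triv_faces : #|faces triv_map triv_map| = 1%N.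
Proof.
have Hall s : [set t | connect (Defs.frel triv_map triv_map) s t] = setT.
  apply/setP => t; rewrite !inE.
  case: (triv_cases s t) => ->; first exact: connect0.
  by apply: connect1; rewrite frel_e.
have -> : faces triv_map triv_map = [set setT].
  apply/setP => F; rewrite inE; apply/imsetP/eqP => [[s _ ->]|->]; first exact: Hall.
  by exists (inl ord0) => //; rewrite Hall.
exact: cards1.
Qed.

Lemma mel_inv n (e c : gmap n) : melonic e c ->
  [/\ (forall s, e (e s) = s), IND e c & (2 * #|faces e c| = 3 * n + 2)%N].
Proof.
elim => [|m eG cG eH cH _ [IH1 IH2 IH3] Hins].
  split; [exact: triv_inv | | by rewrite triv_faces].
  by move=> lam _ [].
have [HeH Hc Hi] := ins_step IH1 Hins.
split => //; first exact: Hi.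
rewrite Hc; lia.
Qed.

Local Close Scope ring_scope.

Theorem lemma5 (n : nat) (e c : {ffun slot n -> slot n}) :
  is_graph e c -> melonic e c -> degree e c = 0%R.
Proof.
move=> [HP _] Hm.
have [_ HI HF] := mel_inv Hm.
have HW := wavy_card HP.
rewrite /degree (rank_Emx HP HI).
lia.
Qed.
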